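(* Let $P\subseteq\mathbb{R}^n$ be an $n$-dimensional rational polytope, let $x\in\mathrm{relint}(\mathrm{core}(P))$, and let $F_1,\dots,F_t$ be the facets of $P$ with $d_{F_i}(x)=\mu(P)^{-1}$, with primitive inner normals $a_1,\dots,a_t$. Then $a_1,\dots,a_t$ positively span the linear subspace $K(P)^\perp$. Moreover, if $\mathrm{core}(P)=\{x\}$, then $\{y\in\mathbb{R}^n: d_{F_i}(y)\ge0 \text{ for all } i=1,\dots,t\}$ is a rational polytope containing $P$.
   Context: Write $P$ irredundantly as $P=\{x:\langle a_i,x\rangle\ge b_i\}$ with primitive $a_i\in(\mathbb{Z}^n)^*$, $b_i\in\mathbb{Q}$, each inequality defining a facet $F_i$; $d_{F_i}(x):=\langle a_i,x\rangle-b_i$, $d_P(x):=\min_i d_{F_i}(x)$, $P^{(s)}:=\{x:d_P(x)\ge s\}$. The $\mathbb{Q}$-codegree is $\mu(P):=(\sup\{s>0:P^{(s)}\neq\emptyset\})^{-1}$ and $\mathrm{core}(P):=P^{(1/\mu(P))}$. $K(P)$ is the linear subspace of $\mathbb{R}^n$ parallel to the affine hull of $\mathrm{core}(P)$, and $K(P)^\perp\subseteq(\mathbb{R}^n)^*$ is the set of linear functionals vanishing on $K(P)$. *)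

(* Defs.v *)
From HB Require Import structures.
From mathcomp Require Import all_boot all_order all_algebra.
From mathcomp Require Import all_classical all_reals.
Set Implicit Arguments. Unset Strict Implicit. Unset Printing Implicit Defensive.
Import Order.TTheory GRing.Theory Num.Theory.
Local Open Scope ring_scope.
Local Open Scope classical_set_scope.

Section Defs.
Variables (R : realType) (n m : nat).
(* The polytope data: inequalities <a_i, x> >= b_i, i : 'I_m. *)
Variables (a : 'I_m -> 'rV[int]_n) (b : 'I_m -> rat).

Definition pt_dF (i : 'I_m) (x : 'rV[R]_n) : R :=
  \sum_(j < n) ((a i) ord0 j)%:~R * x ord0 j - ratr (b i).

Definition pt_Poly : set 'rV[R]_n := [set x | forall i, 0 <= pt_dF i x].

Definition pt_Psub (s : R) : set 'rV[R]_n := [set x | forall i, s <= pt_dF i x].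

Definition pt_mu : R := (sup [set s : R | 0 < s /\ pt_Psub s !=set0])^-1.

Definition pt_core : set 'rV[R]_n := pt_Psub (pt_mu^-1).

Definition pt_irredundant : Prop :=
  forall i, exists y : 'rV[R]_n,
    (forall k, k != i -> 0 <= pt_dF k y) /\ pt_dF i y < 0.

Definition pt_bounded_set (C : set 'rV[R]_n) : Prop :=
  exists M : R, forall y, C y -> forall j, `|y ord0 j| <= M.
End Defs.

Section Geom.
Variables (R : realType) (n : nat).

(* Linear subspace parallel to the affine hull of C: the linear span of
   the differences y - z, y z in C. *)
Definition pt_dirspace (C : set 'rV[R]_n) : set 'rV[R]_n :=
  [set v | exists k (c : 'I_k -> R) (y z : 'I_k -> 'rV[R]_n),
      (forall j, C (y j) /\ C (z j)) /\ v = \sum_(j < k) c j *: (y j - z j)].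

Definition pt_relint (C : set 'rV[R]_n) : set 'rV[R]_n :=
  [set x | C x /\ exists eps : R, 0 < eps /\
     forall y, pt_dirspace C (y - x) ->
       (forall j, `|y ord0 j - x ord0 j| < eps) -> C y].

(* K^pt_perp: linear functionals (row vectors w, pairing sum_j w_j v_j)
   vanishing on K *)
Definition pt_perp (K : set 'rV[R]_n) : set 'rV[R]_n :=
  [set w | forall v, K v -> \sum_(j < n) w ord0 j * v ord0 j = 0].

Definition pt_rat_polytope (Q : set 'rV[R]_n) : Prop :=
  exists k (p : 'I_k -> 'rV[rat]_n),
    Q = [set y | exists c : 'I_k -> R, (forall j, 0 <= c j) /\
           \sum_(j < k) c j = 1 /\
           y = \sum_(j < k) c j *: map_mx (fun q : rat => ratr q) (p j)].
End Geom.

Definition pt_primitive (n : nat) (v : 'rV[int]_n) : Prop :=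
  \big[gcdz/0]_(j < n) v ord0 j = 1.

Arguments pt_dF {R n m} a b i x.
Arguments pt_Poly R {n m} a b.
Arguments pt_Psub R {n m} a b s.
Arguments pt_mu R {n m} a b.
Arguments pt_core R {n m} a b.
Arguments pt_irredundant R {n m} a b.
Arguments pt_bounded_set {R n} C.
Arguments pt_dirspace {R n} C.
Arguments pt_relint {R n} C.
Arguments pt_perp {R n} K.
Arguments pt_rat_polytope {R n} Q.
Arguments pt_primitive {n} v.

(* Main.v *)
Require Import Defs.
From HB Require Import structures.
From mathcomp Require Import all_boot all_order all_algebra.
From mathcomp Require Import all_classical all_reals.
From mathcomp Require Import ring lra zify.
Set Implicit Arguments. Unset Strict Implicit. Unset Printing Implicit Defensive.
Import Order.TTheory GRing.Theory Num.Theory.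
Local Open Scope ring_scope.
Local Open Scope classical_set_scope.


Section Farkas.
Variables (R : realType) (n : nat).
Implicit Types (u v w c : 'rV[R]_n).

Definition dot u v : R := \sum_(j < n) u ord0 j * v ord0 j.

Lemma dotDl u v w : dot (u + v) w = dot u w + dot v w.
Proof. by rewrite /dot -big_split; apply: eq_bigr => j _; rewrite mxE mulrDl. Qed.
Lemma dotDr u v w : dot w (u + v) = dot w u + dot w v.
Proof. by rewrite /dot -big_split; apply: eq_bigr => j _; rewrite mxE mulrDr. Qed.
Lemma dotZl t u v : dot (t *: u) v = t * dot u v.
Proof. by rewrite /dot mulr_sumr; apply: eq_bigr => j _; rewrite mxE mulrA. Qed.
Lemma dotZr t u v : dot v (t *: u) = t * dot v u.
Proof. by rewrite /dot mulr_sumr; apply: eq_bigr => j _; rewrite mxE mulrCA. Qed.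
Lemma dotNl u v : dot (- u) v = - dot u v.
Proof. by rewrite -scaleN1r dotZl mulN1r. Qed.
Lemma dotNr u v : dot v (- u) = - dot v u.
Proof. by rewrite -scaleN1r dotZr mulN1r. Qed.
Lemma dotBl u v w : dot (u - v) w = dot u w - dot v w.
Proof. by rewrite dotDl dotNl. Qed.
Lemma dotBr u v w : dot w (u - v) = dot w u - dot w v.
Proof. by rewrite dotDr dotNr. Qed.
Lemma dot0l v : dot 0 v = 0.
Proof. by rewrite /dot big1 // => j _; rewrite mxE mul0r. Qed.
Lemma dot0r v : dot v 0 = 0.
Proof. by rewrite /dot big1 // => j _; rewrite mxE mulr0. Qed.
Lemma dotC u v : dot u v = dot v u.
Proof. by apply: eq_bigr => j _; rewrite mulrC. Qed.
Lemma dot_sumr (I : Type) (r : seq I) (P : pred I) (F : I -> 'rV[R]_n) v :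
  dot v (\sum_(i <- r | P i) F i) = \sum_(i <- r | P i) dot v (F i).
Proof.
elim/big_rec2: _ => [|i y1 y2 _ <-]; first by rewrite dot0r.
by rewrite dotDr.
Qed.
Lemma dot_suml (I : Type) (r : seq I) (P : pred I) (F : I -> 'rV[R]_n) v :
  dot (\sum_(i <- r | P i) F i) v = \sum_(i <- r | P i) dot (F i) v.
Proof. by rewrite dotC dot_sumr; apply: eq_bigr => i _; rewrite dotC. Qed.

Lemma dot_ge0 v : 0 <= dot v v.
Proof. by apply: sumr_ge0 => j _; rewrite -expr2 sqr_ge0. Qed.
Lemma dot_eq0 v : dot v v = 0 -> v = 0.
Proof.
move=> h; apply/matrixP => i j; rewrite (ord1 i) mxE.
have hs : \sum_(k < n) v ord0 k ^+ 2 = 0.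
  by rewrite -[RHS]h /dot; apply: eq_bigr => k _; rewrite expr2.
have := @psumr_eq0P _ _ predT (fun j => v ord0 j ^+ 2) (fun j _ => sqr_ge0 (v ord0 j)) hs j isT.
by move/eqP; rewrite sqrf_eq0 => /eqP.
Qed.

Fixpoint in_cone (s : seq 'rV[R]_n) c : Prop :=
  match s with
  | [::] => c = 0
  | a :: s' => exists t, 0 <= t /\ in_cone s' (c - t *: a)
  end.

Lemma in_cone0 s : in_cone s 0.
Proof. elim: s => //= a s IH; exists 0; rewrite lexx scale0r subr0; split=> //. Qed.

Lemma in_coneD s c1 c2 : in_cone s c1 -> in_cone s c2 -> in_cone s (c1 + c2).
Proof.
elim: s c1 c2 => [|a s IH] c1 c2 /=; first by move=> -> ->; rewrite addr0.
move=> [t1 [t1p h1]] [t2 [t2p h2]]; exists (t1 + t2); split; first exact: addr_ge0.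
have -> : c1 + c2 - (t1 + t2) *: a = (c1 - t1 *: a) + (c2 - t2 *: a).
  by rewrite scalerDl; rewrite opprD addrACA.
exact: IH.
Qed.

Lemma in_coneZ s c t : 0 <= t -> in_cone s c -> in_cone s (t *: c).
Proof.
elim: s c => [|a s IH] c /= tp; first by move=> ->; rewrite scaler0.
move=> [t1 [t1p h1]]; exists (t * t1); split; first exact: mulr_ge0.
by rewrite -scalerA -scalerBr; apply: IH.
Qed.

Lemma in_cone_cons s a c t : 0 <= t -> in_cone s c -> in_cone (a :: s) (c + t *: a).
Proof. by move=> tp h /=; exists t; split=> //; rewrite addrK. Qed.

Lemma in_cone_proj s a v y :
  (forall z, z \in s -> 0 <= dot z v) ->
  in_cone [seq dot z v *: a - dot a v *: z | z <- s] y ->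
  exists z t, in_cone s z /\ 0 <= t /\ y = t *: a - dot a v *: z.
Proof.
elim: s y => [|z s IH] y hs /=.
  by move=> ->; exists 0, 0; rewrite scale0r scaler0 subr0 lexx.
move=> [t [tp h]].
have [z' [t' [hz' [t'p ey]]]] := IH _ (fun w hw => hs w (mem_behead (s:=z::s) hw)) h.
exists (z' + t *: z), (t' + t * dot z v); split; first exact: in_cone_cons.
split; first by apply: addr_ge0 => //; apply: mulr_ge0 => //; apply: hs; rewrite inE eqxx.
have ey' : y = t' *: a - dot a v *: z' + t *: (dot z v *: a - dot a v *: z).
  by rewrite -ey subrK.
by rewrite ey'; apply/matrixP => i j; rewrite !mxE; ring.
Qed.

Lemma farkas_size k : forall s c, size s = k ->
  in_cone s c \/ exists v, (forall z, z \in s -> 0 <= dot z v) /\ dot c v < 0.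
Proof.
elim: k => [|k IH] [|a s] c //= hk.
  case: (eqVneq c 0) => [->|nc]; first by left.
  right; exists (- c); split=> //; rewrite dotNr oppr_lt0 lt_def dot_ge0 andbT.
  by apply/eqP => /dot_eq0 /eqP; rewrite (negPf nc).
move/eqP: hk; rewrite eqSS => /eqP hk.
have [hc|[v [hv hcv]]] := IH s c hk.
  by left; exists 0; rewrite lexx scale0r subr0.
case: (leP 0 (dot a v)) => hav.
  right; exists v; split=> // z; rewrite inE => /orP[/eqP->//|]; exact: hv.
set s' := [seq dot z v *: a - dot a v *: z | z <- s].
set c' := dot c v *: a - dot a v *: c.
have hs' : size s' = k by rewrite size_map.
have [hc'|[w [hw hcw]]] := IH s' c' hs'.
  have [z [t [hz [tp ey]]]] := in_cone_proj hv hc'.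
  left; exists ((t - dot c v) / (- dot a v)); split.
    by apply: divr_ge0; [rewrite subr_ge0; apply: ltW; apply: lt_le_trans hcv tp|rewrite oppr_ge0 ltW].
  have hz0 : - dot a v != 0 by rewrite oppr_eq0 lt_eqF.
  suff -> : c - (t - dot c v) / - dot a v *: a = z by [].
  have hp : dot a v != 0 by rewrite lt_eqF.
  apply/matrixP => i j; have := congr1 (fun M : 'M[R]_(1,n) => M i j) ey; rewrite /c' !mxE.
  move: (dot a v) (dot c v) hp (c i j) (a i j) (z i j) => p q hp ci ai zi e.
  have ez : zi = (p * ci + (t - q) * ai) / p.
    apply: (mulfI hp); rewrite mulrCA mulfV // mulr1; apply/eqP; rewrite -subr_eq0.
    have -> : p * zi - (p * ci + (t - q) * ai) = (q * ai - p * ci) - (t * ai - p * zi) by ring.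
    by rewrite e subrr.
  by rewrite ez; field.
right; exists (dot a w *: v - dot a v *: w); split.
  move=> z; rewrite inE => /orP[/eqP->|hz].
    by rewrite dotBr !dotZr mulrC subrr.
  have := hw (dot z v *: a - dot a v *: z) (map_f _ hz).
  by rewrite dotBr dotBl !dotZr !dotZl [dot z w]dotC [dot a w]dotC mulrC.
move: hcw; rewrite /c' dotBr dotBl !dotZr !dotZl.
by rewrite [dot a w]dotC [dot c w]dotC mulrC.
Qed.

Lemma farkas s c :
  in_cone s c \/ exists v, (forall z, z \in s -> 0 <= dot z v) /\ dot c v < 0.
Proof. exact: (@farkas_size (size s)). Qed.

End Farkas.



Lemma small_pos (R : realType) (I : finType) (P : pred I) (r : I -> R) :
  (forall i, P i -> 0 < r i) -> exists e, 0 < e /\ forall i, P i -> e <= r i.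
Proof.
move=> hr; exists (\big[Num.min/1]_(i | P i) r i); split.
  elim/big_ind: _ => [|u v hu hv|i Pi]; [exact: ltr01|by rewrite lt_min hu hv|exact: hr].
by move=> i Pi; rewrite (bigD1 i) //= ge_min lexx.
Qed.

Section Main.
Variables (R : realType) (n m : nat) (a : 'I_m -> 'rV[int]_n) (b : 'I_m -> rat).

Definition AA i : 'rV[R]_n := map_mx (fun z : int => z%:~R) (a i).
Local Notation dF := (pt_dF a b).

Lemma dF_dot i y : dF i y = dot (AA i) y - ratr (b i).
Proof. by rewrite /pt_dF /dot; congr (_ - _); apply: eq_bigr => j _; rewrite mxE. Qed.

Lemma dF_add i y v t : dF i (y + t *: v) = dF i y + t * dot (AA i) v.
Proof. by rewrite !dF_dot dotDr dotZr addrAC. Qed.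

Variable s : R.
Let C := [set y : 'rV[R]_n | forall i, s <= dF i y].

Lemma dir1 y z c : C y -> C z -> pt_dirspace C (c *: (y - z)).
Proof.
move=> Cy Cz; exists 1%N, (fun _ => c), (fun _ => y), (fun _ => z); split=> //.
by rewrite big_ord1.
Qed.

Lemma core_active x : pt_relint C x -> forall y, C y -> forall i, dF i x = s -> dF i y = s.
Proof.
move=> [Cx [eps [epsp heps]]] y Cy i hi.
have [e [ep he]] := @small_pos R _ predT (fun j : 'I_n => eps / (`|y ord0 j - x ord0 j| + 1))
  (fun j _ => divr_gt0 epsp (ltr_wpDl (normr_ge0 _) ltr01)).
set z := x + (- e) *: (y - x).
have Cz : C z.
  have hzx : z - x = (- e) *: (y - x) by rewrite /z addrAC subrr add0r.
  apply: heps; first by rewrite hzx; exact: dir1.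
  move=> j; have -> : z ord0 j - x ord0 j = (z - x) ord0 j by rewrite !mxE.
  rewrite hzx mxE normrM normrN (gtr0_norm ep) [(y - x) _ _]mxE [(- x) _ _]mxE.
  have h := he j isT; rewrite ler_pdivlMr ?ltr_wpDl // in h.
  apply: lt_le_trans h; rewrite mulrDr mulr1 ltrDl //.
have h2 := Cz i; rewrite /z dF_add hi in h2.
have ey : y = x + 1 *: (y - x) by rewrite scale1r addrC subrK.
have h1 := Cy i; rewrite ey dF_add hi mul1r in h1.
have e1 : dot (AA i) (y - x) = 0.
  apply/eqP; rewrite eq_le; rewrite lerDl in h1; rewrite h1 andbT.
  by rewrite lerDl mulNr oppr_ge0 (pmulr_rle0 _ ep) in h2.
by rewrite ey dF_add hi e1 mulr0 addr0.
Qed.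

Definition conefun (x : 'rV[R]_n) (w : 'rV[R]_n) := exists lam : 'I_m -> R,
        (forall i, 0 <= lam i) /\
        (forall i, dF i x != s -> lam i = 0) /\
        w = \sum_(i < m) lam i *: AA i.

Lemma cone_of_list (l : seq 'I_m) w : in_cone (map AA l) w ->
  exists lam : 'I_m -> R, (forall i, 0 <= lam i) /\ (forall i, i \notin l -> lam i = 0) /\
    w = \sum_(i < m) lam i *: AA i.
Proof.
elim: l w => [|i0 l IH] w /=.
  move=> ->; exists (fun _ => 0); split=> //; split=> //.
  by rewrite big1 // => i _; rewrite scale0r.
move=> [t [tp h]]; have [lam [l0 [l1 e]]] := IH _ h.
exists (fun j => lam j + (if j == i0 then t else 0)); split.
  by move=> j; apply: addr_ge0 => //; case: ifP.
split.
  by move=> j; rewrite inE negb_or => /andP[/negPf -> /l1 ->]; rewrite addr0.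
have -> : w = (w - t *: AA i0) + t *: AA i0 by rewrite subrK.
rewrite e; under eq_bigr do rewrite scalerDl.
rewrite big_split /=; congr (_ + _).
rewrite (bigD1 i0) //= eqxx big1 ?addr0 // => j /negPf ->; by rewrite scale0r.
Qed.

Lemma perp_sub x : pt_relint C x -> forall w, pt_perp (pt_dirspace C) w -> conefun x w.
Proof.
move=> hx w hw; have Cx := hx.1.
set l := [seq i <- enum 'I_m | dF i x == s].
have [hc|[v [hv hwv]]] := farkas (map AA l) w.
  have [lam [l0 [l1 e]]] := cone_of_list hc.
  exists lam; split=> //; split=> // i hi; apply: l1.
  by rewrite mem_filter negb_and; apply/orP; left.
have hslack : forall i, dF i x != s -> 0 < dF i x - s.
  by move=> i hi; rewrite subr_gt0 lt_def hi (Cx i).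
have [e [ep he]] := @small_pos R _ (fun i => dF i x != s)
  (fun i => (dF i x - s) / (`|dot (AA i) v| + 1))
  (fun i hi => divr_gt0 (hslack i hi) (ltr_wpDl (normr_ge0 _) ltr01)).
have Cy : C (x + e *: v).
  move=> i; rewrite dF_add.
  case: (eqVneq (dF i x) s) => hi.
    rewrite hi lerDl; apply: mulr_ge0; first exact: ltW.
    by apply: hv; apply: map_f; rewrite mem_filter hi eqxx mem_enum.
  have h := he i hi; rewrite ler_pdivlMr ?ltr_wpDl // in h.
  rewrite -lerBlDl; apply: le_trans (_ : - (e * `|dot (AA i) v|) <= _).
    rewrite lerNr opprB; apply: le_trans h; rewrite mulrDr mulr1 lerDl ltW //.
  by rewrite lerNl; apply: le_trans (ler_norm _) _; rewrite normrN normrM (gtr0_norm ep).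
have hd : pt_dirspace C (e *: v).
  by have := dir1 1 Cy Cx; rewrite scale1r addrAC subrr add0r.
have := hw _ hd; rewrite -/(dot w (e *: v)) dotZr => /eqP.
by rewrite mulf_eq0 gt_eqF //= lt_eqF.
Qed.

Lemma perp_sup x : pt_relint C x -> forall w, conefun x w -> pt_perp (pt_dirspace C) w.
Proof.
move=> hx w [lam [l0 [l1 ->]]] v [k [c [y [z [hyz ->]]]]].
have key : forall u, C u -> dot (\sum_(i < m) lam i *: AA i) u =
    \sum_(i < m) lam i * (s + ratr (b i)).
  move=> u Cu; rewrite dot_suml; apply: eq_bigr => i _; rewrite dotZl.
  case: (eqVneq (dF i x) s) => hi; last by rewrite l1 // !mul0r.
  have := core_active hx Cu hi; rewrite dF_dot => /eqP; rewrite subr_eq => /eqP ->.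
  by rewrite addrC.
change (dot (\sum_(i < m) lam i *: AA i) (\sum_(j < k) c j *: (y j - z j)) = 0).
rewrite dot_sumr big1 // => j _; rewrite dotZr dotBr !key ?subrr ?mulr0 //; by case: (hyz j).
Qed.

End Main.



Section Part2.
Variables (R : realType) (n m : nat) (a : 'I_m -> 'rV[int]_n) (b : 'I_m -> rat).
Variables (s : R) (x : 'rV[R]_n).
Local Notation dF := (pt_dF a b).
Local Notation A := (AA R a).
Hypothesis hall : forall w, conefun a b s x w.

Let Q := [set y : 'rV[R]_n | forall i, dF i x = s -> 0 <= dF i y].
Definition act (y : 'rV[R]_n) : {set 'I_m} := [set i | (dF i x == s) && (dF i y == 0)].
Definition vertex y := Q y /\ forall v, (forall i, i \in act y -> dot (A i) v = 0) -> v = 0.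

Lemma neg_dir v : v != 0 -> exists i, dF i x = s /\ dot (A i) v < 0.
Proof.
move=> nv; have [lam [l0 [l1 e]]] := hall (- v).
have : dot (- v) v < 0.
  rewrite dotNl oppr_lt0 lt_def dot_ge0 andbT.
  by apply/eqP => /dot_eq0 /eqP; rewrite (negPf nv).
rewrite e dot_suml => hlt.
have [i hi] : exists i, lam i * dot (A i) v < 0.
  apply/not_existsP => hn; move: hlt; apply/negP; rewrite -leNgt.
  apply: sumr_ge0 => i _; rewrite dotZl leNgt; apply/negP => h; apply: (hn i) => //.
exists i; split.
  by case: (eqVneq (dF i x) s) => // /l1 h0; move: hi; rewrite h0 mul0r ltxx.
have lp : 0 < lam i.
  by rewrite lt_def l0 andbT; apply/eqP => h0; move: hi; rewrite h0 mul0r ltxx.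
by move: hi; rewrite pmulr_rlt0.
Qed.

Lemma step y v : Q y -> v != 0 -> (forall i, i \in act y -> dot (A i) v = 0) ->
  exists t, 0 < t /\ Q (y + t *: v) /\ (#|act y| < #|act (y + t *: v)|)%N.
Proof.
move=> Qy nv hv.
have [i1 [hi1 hd1]] := neg_dir nv.
pose P := fun i => (dF i x == s) && (dot (A i) v < 0).
have Pi1 : P i1 by rewrite /P hi1 eqxx hd1.
case: (arg_minP (fun i => dF i y / - dot (A i) v) Pi1) => i0 /andP[/eqP hi0 hd0] hmin.
set t := dF i0 y / - dot (A i0) v.
have nact0 : i0 \notin act y.
  by rewrite inE hi0 eqxx /=; apply/negP => /eqP h; have := hv i0; rewrite inE hi0 h !eqxx => /(_ isT) hd; move: hd0; rewrite hd ltxx.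
have yp : 0 < dF i0 y.
  rewrite lt_def (Qy _ hi0) andbT; apply: contra nact0 => h; by rewrite inE hi0 eqxx.
have tp : 0 < t by rewrite /t divr_gt0 // oppr_gt0.
exists t; split=> //; split.
  move=> i hi; rewrite dF_add.
  case: (leP 0 (dot (A i) v)) => hd.
    by apply: addr_ge0; [exact: Qy|exact: mulr_ge0 (ltW tp) hd].
  have Pi : P i by rewrite /P hi eqxx hd.
  have := hmin i Pi.
  rewrite -/t ler_pdivlMr ?oppr_gt0 // mulrN => h.
  by move: h; rewrite -subr_ge0 opprK.
apply: proper_card; apply/properP; split.
  apply/fintype.subsetP => i; rewrite !inE => /andP[hix /eqP h]; rewrite hix /= dF_add h add0r.
  by have := hv i; rewrite inE hix h eqxx => /(_ isT) ->; rewrite mulr0.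
exists i0 => //; rewrite inE hi0 eqxx /= dF_add /t invrN mulrN mulNr (mulfVK (negbT (lt_eqF hd0))).
by rewrite subrr.
Qed.

Lemma act_dot z i : i \in act z -> dot (A i) z = ratr (b i).
Proof.
rewrite inE => /andP[_ /eqP]; rewrite dF_dot => /eqP; rewrite subr_eq0 => /eqP.
by [].
Qed.

Lemma vertex_eq z u : vertex z -> (forall i, i \in act z -> dot (A i) u = ratr (b i)) -> u = z.
Proof.
move=> [_ hv] hu; apply/esym/subr0_eq; apply: hv => i hi.
by rewrite dotBr act_dot // hu // subrr.
Qed.

Lemma descent (Pr : 'rV[R]_n -> Prop) :
  (forall y, vertex y -> Pr y) ->
  (forall y v t1 t2, Q y -> 0 < t1 -> 0 < t2 -> Pr (y + t1 *: v) -> Pr (y + t2 *: (- v)) -> Pr y) ->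
  forall y, Q y -> Pr y.
Proof.
move=> hV hS.
suff : forall N y, (m - #|act y| < N)%N -> Q y -> Pr y.
  by move=> h y; apply: (h (m - #|act y|).+1).
elim=> [//|N IH] y hN Qy.
case: (pselect (exists v, (forall i, i \in act y -> dot (A i) v = 0) /\ v != 0)) => [[v [hv nv]]|hn].
  have [t1 [t1p [Q1 c1]]] := step Qy nv hv.
  have [t2 [t2p [Q2 c2]]] : exists t, 0 < t /\ Q (y + t *: - v) /\ (#|act y| < #|act (y + t *: - v)|)%N.
    apply: step => //; first by rewrite oppr_eq0.
    by move=> i hi; rewrite dotNr hv // oppr0.
  have cm1 : (#|act (y + t1 *: v)| <= m)%N by rewrite -[X in (_ <= X)%N]card_ord max_card.
  have cm2 : (#|act (y + t2 *: - v)| <= m)%N by rewrite -[X in (_ <= X)%N]card_ord max_card.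
  apply: (hS y v t1 t2) => //; apply: IH => //.
    by move: c1 cm1 hN; set k1 := #|act (y + t1 *: v)|; set k0 := #|act y|; lia.
  by move: c2 cm2 hN; set k1 := #|act (y + t2 *: - v)|; set k0 := #|act y|; lia.
apply: hV; split=> // v hv; case: (eqVneq v 0) => // nv; exfalso; apply: hn; exists v; split.
  exact: hv.
exact: nv.
Qed.

Lemma exists_vertex y : Q y -> exists z, vertex z.
Proof.
move=> Qy; apply: (@descent (fun _ => exists z, vertex z) _ _ y Qy) => [z vz|//]; by exists z.
Qed.

Definition Mx (S : {set 'I_m}) : 'M[rat]_(n, m) :=
  \matrix_(j, i) (if i \in S then (a i ord0 j)%:~R else 0).

Lemma Mx_entry S (u : 'rV[R]_n) i :
  (u *m map_mx ratr (Mx S)) ord0 i = if i \in S then dot (A i) u else 0.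
Proof.
rewrite !mxE; case: ifP => hi.
  rewrite /dot; apply: eq_bigr => j _; rewrite /Mx !mxE hi ratr_int mulrC.
  by [].
by rewrite big1 // => j _; rewrite /Mx !mxE hi rmorph0 mulr0.
Qed.

Lemma vertex_rat z : vertex z -> exists q : 'rV[rat]_n, map_mx ratr q = z.
Proof.
move=> vz; set S := act z.
set beta : 'rV[rat]_m := \row_i (if i \in S then b i else 0).
have hz : map_mx ratr beta = z *m map_mx ratr (Mx S).
  apply/matrixP => i0 i; rewrite (ord1 i0) Mx_entry !mxE.
  by case: ifP => hi; [rewrite act_dot|rewrite rmorph0].
have : (map_mx (@ratr R) beta <= map_mx (@ratr R) (Mx S))%MS by apply/submxP; exists z.
rewrite map_submx => /submxP [D hD]; exists D.
apply: vertex_eq => // i hi.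
have := congr1 (fun M : 'M[R]_(1, m) => M ord0 i) (congr1 (map_mx ratr) hD).
rewrite /= map_mxM Mx_entry hi !mxE hi => <-.
by [].
Qed.

Definition convp k (p : 'I_k -> 'rV[rat]_n) : set 'rV[R]_n :=
  [set y | exists c : 'I_k -> R, (forall j, 0 <= c j) /\
           \sum_(j < k) c j = 1 /\
           y = \sum_(j < k) c j *: map_mx (fun q : rat => ratr q) (p j)].

Lemma convp_comb k (p : 'I_k -> 'rV[rat]_n) y1 y2 l : convp p y1 -> convp p y2 ->
  0 <= l -> l <= 1 -> convp p (l *: y1 + (1 - l) *: y2).
Proof.
move=> [c1 [c10 [c11 ->]]] [c2 [c20 [c21 ->]]] l0 l1.
exists (fun j => l * c1 j + (1 - l) * c2 j); split.
  by move=> j; apply: addr_ge0; apply: mulr_ge0 => //; rewrite subr_ge0.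
split.
  by rewrite big_split /= -!mulr_sumr c11 c21 !mulr1 addrC subrK.
rewrite !scaler_sumr -big_split /=; apply: eq_bigr => j _.
by apply/matrixP => i0 j0; rewrite !mxE; ring.
Qed.

Lemma Q_of_convp k (p : 'I_k -> 'rV[rat]_n) :
  (forall j, Q (map_mx (fun q : rat => ratr q) (p j))) -> forall y, convp p y -> Q y.
Proof.
move=> hp y [c [c0 [c1 ->]]] i hi.
have -> : dF i (\sum_(j < k) c j *: map_mx (fun q : rat => ratr q) (p j)) =
    \sum_(j < k) c j * dF i (map_mx (fun q : rat => ratr q) (p j)).
  rewrite dF_dot dot_sumr.
  under [RHS]eq_bigr do rewrite dF_dot mulrBr.
  rewrite sumrB -mulr_suml c1 mul1r; congr (_ - _).
  by apply: eq_bigr => j _; rewrite dotZr.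
by apply: sumr_ge0 => j _; apply: mulr_ge0 => //; apply: hp.
Qed.

Lemma part2 y0 : Q y0 -> pt_rat_polytope Q.
Proof.
move=> Qy0; have [v0 hv0] := exists_vertex Qy0.
have [q0 hq0] := vertex_rat hv0.
have hch : forall S : {set 'I_m}, exists q : 'rV[rat]_n,
    vertex (map_mx (fun q : rat => ratr q) q) /\
    forall z, vertex z -> act z = S -> z = map_mx (fun q : rat => ratr q) q.
  move=> S; case: (pselect (exists z, vertex z /\ act z = S)) => [[z [vz hS]]|hn].
    have [q hq] := vertex_rat vz; exists q; rewrite hq; split=> // z' vz' hS'.
    by apply: vertex_eq => // i; rewrite hS -hS'; apply: act_dot.
  exists q0; rewrite hq0; split=> // z vz hS; exfalso; apply: hn; exists z; split.
    exact: vz.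
  exact: hS.
have [f hf] := choice hch.
exists #|{set 'I_m}|, (fun j : 'I_#|{set 'I_m}| => f (enum_val j)).
have hpQ : forall j : 'I_#|{set 'I_m}|, Q (map_mx (fun q : rat => ratr q) (f (enum_val j))).
  by move=> j; have [[]] := hf (enum_val j).
apply/seteqP; split; last first.
  by move=> y; apply: (Q_of_convp hpQ).
move=> y Qy; apply: (@descent (convp (fun j : 'I_#|{set 'I_m}| => f (enum_val j)))) Qy.
  move=> z vz; pose j0 := enum_rank (act z).
  exists (fun j => (j == j0)%:R); split; first by move=> j; case: (j == j0).
  split.
    by rewrite (bigD1 j0) //= eqxx big1 ?addr0 // => j /negPf ->.
  rewrite (bigD1 j0) //= eqxx big1 ?addr0; last by move=> j /negPf ->; rewrite scale0r.
  by rewrite scale1r /j0 enum_rankK; apply: (hf (act z)).2.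
move=> z v t1 t2 Qz t1p t2p h1 h2.
have tp : 0 < t1 + t2 by rewrite addr_gt0.
have := convp_comb h1 h2 (l := t2 / (t1 + t2)).
have -> : t2 / (t1 + t2) *: (z + t1 *: v) + (1 - t2 / (t1 + t2)) *: (z + t2 *: - v) = z.
  apply/matrixP => i j; rewrite !mxE; field; by rewrite gt_eqF.
apply.
  by rewrite divr_ge0 // ltW.
by rewrite ler_pdivrMr // mul1r lerDr ltW.
Qed.

End Part2.

Unset Implicit Arguments. Set Strict Implicit.
Theorem lemma2p2 (R : realType) (n m : nat)
    (a : 'I_m -> 'rV[int]_n) (b : 'I_m -> rat) (x : 'rV[R]_n) :
  (0 < n)%N ->
  (forall i, pt_primitive (a i)) ->
  pt_irredundant R a b ->
  pt_bounded_set (pt_Poly R a b) ->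
  (forall v : 'rV[R]_n, pt_dirspace (pt_Poly R a b) v) ->
  pt_relint (pt_core R a b) x ->
  (pt_perp (pt_dirspace (pt_core R a b)) =
     [set w | exists lam : 'I_m -> R,
        (forall i, 0 <= lam i) /\
        (forall i, pt_dF a b i x != (pt_mu R a b)^-1 -> lam i = 0) /\
        w = \sum_(i < m) lam i *: map_mx (fun z : int => z%:~R) (a i)])
  /\
  (pt_core R a b = [set x] ->
     pt_rat_polytope [set y : 'rV[R]_n | forall i, pt_dF a b i x = (pt_mu R a b)^-1 -> 0 <= pt_dF a b i y]
     /\ pt_Poly R a b `<=`
        [set y | forall i, pt_dF a b i x = (pt_mu R a b)^-1 -> 0 <= pt_dF a b i y]).
Proof.
move=> n0 _ _ _ hdir hx.
split.
  apply/seteqP; split => w hw.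
    exact: (perp_sub hx hw).
  exact: (perp_sup hx hw).
move=> hcore.
have hall : forall w, conefun a b (pt_mu R a b)^-1 x w.
  move=> w; apply: (perp_sub hx) => v [k [c [y [z [hyz ->]]]]].
  have -> : \sum_(j < k) c j *: (y j - z j) = 0.
    have hc : forall u, pt_core R a b u -> u = x by move=> u; rewrite hcore.
    apply: big1 => j _; have [hy hz] := hyz j.
    by rewrite (hc _ hy) (hc _ hz) subrr scaler0.
  exact: (dot0r w).
have [y0 Py0] : exists y, pt_Poly R a b y.
  have [k [c [y [z [hyz e]]]]] := hdir (const_mx 1).
  case: k c y z hyz e => [|k] c y z hyz e.
    have := congr1 (fun M : 'M[R]_(1, n) => M ord0 (Ordinal n0)) e.
    by rewrite big_ord0 !mxE => /eqP; rewrite oner_eq0.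
  by exists (y ord0); have [] := hyz ord0.
split.
  by apply: (part2 hall (y0 := y0)) => i _; apply: Py0.
by move=> y Py i _; apply: Py.
Qed.
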